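(* Let $E$ be a disjunctive interval multiplicity expression (DIME) over a finite alphabet $\Sigma$ and let $w$ be an unordered word over $\Sigma$. Then $w\in L(E)$ if and only if $w\models \Delta_E$.
   Context: Unordered words are functions $w:\Sigma\to\mathbb{N}_0$; $a\in w$ means $w(a)\neq 0$; $\varepsilon$ is the all-zero word; unordered concatenation $\uplus$ is multiset union, extended to languages pointwise. An interval is $[n,m]$ or $[n,m]^?$ with $n\in\mathbb{N}_0$, $m\in\mathbb{N}_0\cup\{\infty\}$; $L(E^{[n,m]})=\{w_1\uplus\dots\uplus w_i\mid n\le i\le m, w_j\in L(E)\}$, $L(E^{[n,m]^?})=L(E^{[n,m]})\cup\{\varepsilon\}$; the multiplicities $*,+,?,1$ denote $[0,\infty],[1,\infty],[0,1],[1,1]$. Also $L(a)=\{a\}$, $L(E_1\mid E_2)=L(E_1)\cup L(E_2)$, $L(E_1\mathbin{|\hspace{-0.1em}|} E_2)=L(E_1)\uplus L(E_2)$. An atom is $(a_1^{I_1}\mathbin{|\hspace{-0.1em}|}\dots\mathbin{|\hspace{-0.1em}|} a_k^{I_k})$ with $a_i\in\Sigma$ and each $I_i\in\{?,1\}$. A clause is $(A_1^{I_1}\mid\dots\mid A_k^{I_k})$ with atoms $A_i$ and intervals $I_i$; it is simple if each $I_i\in\{?,1\}$. A DIME is $(D_1^{I_1}\mathbin{|\hspace{-0.1em}|}\dots\mathbin{|\hspace{-0.1em}|} D_k^{I_k})$ where for each $i$ either $D_i$ is a simple clause and $I_i\in\{+,*\}$, or $D_i$ is a clause and $I_i\in\{1,?\}$;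 moreover each symbol of $\Sigma$ occurs at most once in the DIME. The characterizing tuple of $E$ is $\Delta_E=(C_E,N_E,P_E,K_E)$ where $C_E=\{(a,b)\in\Sigma\times\Sigma\mid \neg\exists w\in L(E).\ a\in w\wedge b\in w\}$, $N_E=\{(a,w(a))\mid a\in\Sigma, w\in L(E)\}$, $P_E=\{X\subseteq\Sigma\mid\forall w\in L(E).\ \exists a\in X.\ a\in w\}$, $K_E=\{(a,b)\in\Sigma\times\Sigma\mid\forall w\in L(E).\ w(a)\ge w(b)\}$. An unordered word $w$ satisfies $\Delta_E$, written $w\models\Delta_E$, if: (1) for all $(a,b)\in C_E$, not both $a\in w$ and $b\in w$; (2) for all $a\in\Sigma$, $(a,w(a))\in N_E$; (3) for all $X\in P_E$ there is $a\in X$ with $a\in w$; (4) for all $(a,b)\in K_E$, $w(a)\ge w(b)$. *)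

(* Defs.v *)
From Stdlib Require List.
From mathcomp Require Import all_boot.

Set Implicit Arguments.
Unset Strict Implicit.
Unset Printing Implicit Defensive.

Section DIME.
Variable Sigma : finType.

(* unordered words: functions Sigma -> N_0 *)
Definition word := {ffun Sigma -> nat}.
Definition eps : word := [ffun _ => 0].
Definition uconc (w1 w2 : word) : word := [ffun a => w1 a + w2 a].
Definition occurs (a : Sigma) (w : word) : Prop := w a <> 0.

Definition lang := word -> Prop.
Definition L_sym (a : Sigma) : lang := fun w => w = [ffun x => nat_of_bool (x == a)].
Definition L_union (L1 L2 : lang) : lang := fun w => L1 w \/ L2 w.
Definition L_conc (L1 L2 : lang) : lang :=
  fun w => exists w1 w2, L1 w1 /\ L2 w2 /\ w = uconc w1 w2.
Definition L_empty : lang := fun _ => False.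
Definition L_eps : lang := fun w => w = eps.
Fixpoint L_pow (L : lang) (n : nat) : lang :=
  match n with 0 => L_eps | n'.+1 => L_conc L (L_pow L n') end.

(* intervals [n,m] (opt = false) and [n,m]^? (opt = true); hi = None is infinity *)
Record interval := Itv { itv_lo : nat; itv_hi : option nat; itv_opt : bool }.
Definition in_range (I : interval) (i : nat) : Prop :=
  itv_lo I <= i /\ match itv_hi I with Some m => i <= m | None => True end.
Definition itv_wf (I : interval) : Prop :=
  match itv_hi I with Some m => itv_lo I <= m | None => True end.
Definition L_rep (L : lang) (I : interval) : lang :=
  fun w => (exists i, in_range I i /\ L_pow L i w) \/ (itv_opt I /\ w = eps).

Definition m_star := Itv 0 None false.
Definition m_plus := Itv 1 None false.
Definition m_opt  := Itv 0 (Some 1) false.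
Definition m_one  := Itv 1 (Some 1) false.

(* atom (a_1^{I_1} || ... || a_k^{I_k}) *)
Definition atom := seq (Sigma * interval).
(* clause (A_1^{I_1} | ... | A_k^{I_k}) *)
Definition clause := seq (atom * interval).
(* expression (D_1^{I_1} || ... || D_k^{I_k}) *)
Definition dime := seq (clause * interval).

Definition L_atom (A : atom) : lang :=
  foldr (fun p acc => L_conc (L_rep (L_sym p.1) p.2) acc) L_eps A.
Definition L_clause (C : clause) : lang :=
  foldr (fun p acc => L_union (L_rep (L_atom p.1) p.2) acc) L_empty C.
Definition L_dime (E : dime) : lang :=
  foldr (fun p acc => L_conc (L_rep (L_clause p.1) p.2) acc) L_eps E.

Definition is_atom (A : atom) : Prop :=
  A <> [::] /\ forall p, List.In p A -> p.2 = m_opt \/ p.2 = m_one.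
Definition is_clause (C : clause) : Prop :=
  C <> [::] /\ forall p, List.In p C -> is_atom p.1 /\ itv_wf p.2.
Definition is_simple_clause (C : clause) : Prop :=
  is_clause C /\ forall p, List.In p C -> p.2 = m_opt \/ p.2 = m_one.
Definition dime_symbols (E : dime) : seq Sigma :=
  flatten [seq flatten [seq [seq q.1 | q <- A.1] | A <- D.1] | D <- E].
Definition is_dime (E : dime) : Prop :=
  [/\ E <> [::],
      (forall p, List.In p E ->
         (is_simple_clause p.1 /\ (p.2 = m_plus \/ p.2 = m_star)) \/
         (is_clause p.1 /\ (p.2 = m_one \/ p.2 = m_opt)))
    & uniq (dime_symbols E)].

Record char_tuple := CharTuple {
  ct_C : Sigma -> Sigma -> Prop;
  ct_N : Sigma -> nat -> Prop;
  ct_P : {set Sigma} -> Prop;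
  ct_K : Sigma -> Sigma -> Prop }.

Definition Delta (L : lang) : char_tuple := CharTuple
  (fun a b => ~ exists w, L w /\ occurs a w /\ occurs b w)
  (fun a n => exists w, L w /\ w a = n)
  (fun X => forall w, L w -> exists2 a, a \in X & occurs a w)
  (fun a b => forall w, L w -> w b <= w a).

Definition models (w : word) (D : char_tuple) : Prop :=
  [/\ (forall a b, ct_C D a b -> ~ (occurs a w /\ occurs b w)),
      (forall a, ct_N D a (w a)),
      (forall X, ct_P D X -> exists2 a, a \in X & occurs a w)
    & (forall a b, ct_K D a b -> w b <= w a)].

End DIME.

(* Main.v *)
Require Import Defs.
From mathcomp Require Import all_boot zify.
From Stdlib Require Import Classical.
From Stdlib Require List.



Unset Printing Implicit Defensive.

Lemma uconc0w {S : finType} (w : word S) : uconc (eps S) w = w.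
Proof. by apply/ffunP => a; rewrite !ffunE. Qed.
Lemma uconcw0 {S : finType} (w : word S) : uconc w (eps S) = w.
Proof. by apply/ffunP => a; rewrite !ffunE addn0. Qed.
Lemma uconcC {S : finType} (w1 w2 : word S) : uconc w1 w2 = uconc w2 w1.
Proof. by apply/ffunP => a; rewrite !ffunE addnC. Qed.
Lemma uconcA {S : finType} (w1 w2 w3 : word S) :
  uconc w1 (uconc w2 w3) = uconc (uconc w1 w2) w3.
Proof. by apply/ffunP => a; rewrite !ffunE addnA. Qed.
Lemma epsE {S : finType} (a : S) : eps S a = 0.
Proof. by rewrite ffunE. Qed.
Lemma uconcE {S : finType} (w1 w2 : word S) a : uconc w1 w2 a = w1 a + w2 a.
Proof. by rewrite ffunE. Qed.

Lemma neq_eps {S : finType} (w : word S) : w <> eps S -> exists a, w a <> 0.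
Proof.
move=> H; apply: NNPP => H1; apply: H; apply/ffunP => a; rewrite ffunE.
by apply: NNPP => H2; apply: H1; exists a.
Qed.

Definition charac {S : finType} (L : lang S) := forall w, models w (Delta L) -> L w.

Lemma models_mem {S : finType} (L : lang S) w : L w -> models w (Delta L).
Proof.
move=> Lw; split => /=.
- by move=> a b H Hab; apply: H; exists w.
- by move=> a; exists w.
- by move=> X H; apply: H.
- by move=> a b H; apply: H.
Qed.

Lemma charac_ext {S : finType} (L L' : lang S) :
  (forall w, L w <-> L' w) -> charac L -> charac L'.
Proof.
move=> E H w [HC HN HP HK]; apply/E; apply: H; split => /=.
- move=> a b Hab; apply: HC => -[v [Lv Hv]]; apply: Hab; exists v; by rewrite E.
- move=> a; have [v [Lv Hv]] := HN a; exists v; by rewrite E.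
- move=> X HX; apply: HP => v Lv; apply: HX; by rewrite E.
- move=> a b Hab; apply: HK => v Lv; apply: Hab; by rewrite E.
Qed.

Lemma eps_case {S : finType} (L : lang S) : models (eps S) (Delta L) -> L (eps S).
Proof.
move=> [HC HN HP HK]; apply: NNPP => H.
suff : forall v, L v -> exists2 a, a \in [set: S] & occurs a v.
  by move/HP => [a _ Hocc]; apply: Hocc; rewrite epsE.
move=> v Lv; have : v <> eps S by move=> E; apply: H; rewrite -E.
move/neq_eps => [a Ha]; exists a; [exact: in_setT | exact: Ha].
Qed.

Definition restr {S : finType} (P : pred S) (w : word S) : word S :=
  [ffun a => if P a then w a else 0].

Lemma restrE {S : finType} (P : pred S) w a : restr P w a = if P a then w a else 0.
Proof. by rewrite ffunE. Qed.

Lemma models_restr {S : finType} {L L1 : lang S} {P : pred S} {w} :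
  (forall v, L v -> L1 (restr P v)) ->
  (forall u, L1 u -> forall a, ~~ P a -> u a = 0) ->
  models w (Delta L) -> models (restr P w) (Delta L1).
Proof.
move=> Hi Hs [HC HN HP HK]; split => /=.
- move=> a b Hab [Ha Hb]; move: Ha Hb; rewrite /occurs !restrE.
  case Pa: (P a) => // Ha; case Pb: (P b) => // Hb.
  apply: (HC a b) => //; case=> v [Lv [Hva Hvb]]; apply: Hab; exists (restr P v).
  by split; [exact: Hi|rewrite /occurs !restrE Pa Pb].
- move=> a; rewrite restrE; have [v [Lv Hv]] := HN a.
  case Pa: (P a).
    by exists (restr P v); split; [exact: Hi| rewrite restrE Pa].
  by exists (restr P v); split; [exact: Hi| apply: Hs; [exact: Hi| rewrite Pa]].
- move=> X HX.
  suff /HP [a Ha Hoc] : forall v, L v -> exists2 a, a \in [set x in X | P x] & occurs a v.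
    exists a; first by move: Ha; rewrite inE => /andP[].
    by move: Ha Hoc; rewrite inE /occurs restrE => /andP[_ ->].
  move=> v Lv; have [a Ha Hoc] := HX _ (Hi v Lv).
  have Pa : P a by apply: contraT => Pa; move: Hoc; rewrite /occurs restrE (negbTE Pa).
  exists a; first by rewrite inE Ha Pa.
  by move: Hoc; rewrite /occurs restrE Pa.
- move=> a b Hab; rewrite !restrE.
  case Pb: (P b) => //; case Pa: (P a).
    apply: (HK a b) => v Lv; have := Hab _ (Hi v Lv); by rewrite !restrE Pa Pb.
  have [v [Lv Hv]] := HN b; rewrite -Hv.
  have := Hab _ (Hi v Lv); rewrite !restrE Pa Pb; lia.
Qed.

Lemma charac_conc {S : finType} (L1 L2 : lang S) (P : pred S) :
  charac L1 -> charac L2 ->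
  (forall u, L1 u -> forall a, ~~ P a -> u a = 0) ->
  (forall u, L2 u -> forall a, P a -> u a = 0) ->
  charac (L_conc L1 L2).
Proof.
move=> C1 C2 S1 S2 w Hm.
have E1 : forall v, L_conc L1 L2 v -> L1 (restr P v).
  move=> v [v1 [v2 [L1v [L2v ->]]]].
  have -> : restr P (uconc v1 v2) = v1 => //.
  apply/ffunP => a; rewrite restrE uconcE.
  case Pa: (P a); first by rewrite (S2 v2 L2v a Pa) addn0.
  by rewrite (S1 v1 L1v a) // Pa.
have E2 : forall v, L_conc L1 L2 v -> L2 (restr (predC P) v).
  move=> v [v1 [v2 [L1v [L2v ->]]]].
  have -> : restr (predC P) (uconc v1 v2) = v2 => //.
  apply/ffunP => a; rewrite restrE uconcE /=.
  case Pa: (P a) => /=; first by rewrite (S2 v2 L2v a Pa).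
  by rewrite (S1 v1 L1v a) // Pa.
have H1 := C1 _ (models_restr E1 S1 Hm).
have H2 := C2 _ (models_restr E2 (fun u Lu a Pa => S2 u Lu a (negbNE Pa)) Hm).
exists (restr P w), (restr (predC P) w); split; first exact: H1; split; first exact: H2.
apply/ffunP => a; rewrite uconcE !restrE /=; by case: (P a); rewrite ?addn0.
Qed.

Definition syms {S : finType} (A : atom S) : seq S := [seq q.1 | q <- A].
Definition csyms {S : finType} (C : clause S) : seq S := flatten [seq syms p.1 | p <- C].

Lemma in_syms_In {S : finType} {A : atom S} {x} :
  x \in syms A -> exists r, List.In r A /\ r.1 = x.
Proof.
elim: A => //= r A IH; rewrite in_cons => /orP[/eqP ->|/IH [r' [H1 H2]]].
  by exists r; split; [left|].
by exists r'; split; [right|].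
Qed.

Lemma In_syms {S : finType} {A : atom S} {r} : List.In r A -> r.1 \in syms A.
Proof. elim: A => //= r' A IH [->|/IH H]; rewrite in_cons ?eqxx ?H ?orbT //. Qed.

Lemma In_csyms {S : finType} {C : clause S} {p x} :
  List.In p C -> x \in syms p.1 -> x \in csyms C.
Proof.
elim: C => //= p' C IH [->|/IH H] Hx; rewrite mem_cat ?Hx ?H ?orbT //.
Qed.

Lemma csyms_In {S : finType} {C : clause S} {x} :
  x \in csyms C -> exists p, List.In p C /\ x \in syms p.1.
Proof.
elim: C => //= p C IH; rewrite mem_cat => /orP[H|/IH [p' [H1 H2]]].
  by exists p; split; [left|].
by exists p'; split; [right|].
Qed.

Lemma uniq_same {S : finType} {C : clause S} {p q x} :
  uniq (csyms C) -> List.In p C -> List.In q C -> x \in syms p.1 -> x \in syms q.1 -> p = q.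
Proof.
elim: C => //= r C IH; rewrite cat_uniq => /and3P[U1 U2 U3].
move=> [<-|Hp] [<-|Hq] Hx Hy //.
- exfalso; move/hasPn: U2 => /(_ x); rewrite (In_csyms Hq Hy) Hx; by move/(_ isT).
- exfalso; move/hasPn: U2 => /(_ x); rewrite (In_csyms Hp Hx) Hy; by move/(_ isT).
- exact: IH.
Qed.

Definition irange (I : interval) (i : nat) := in_range I i \/ (itv_opt I /\ i = 0).

Lemma pow0 {S : finType} (L : lang S) w : L_pow L 0 w <-> w = eps S.
Proof. by []. Qed.

Lemma pow1 {S : finType} (L : lang S) w : L_pow L 1 w <-> L w.
Proof.
split; first by move=> [w1 [w2 [H1 [-> ->]]]]; rewrite uconcw0.
by move=> H; exists w, (eps S); rewrite uconcw0.
Qed.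

Lemma rep_iff {S : finType} (L : lang S) I w :
  L_rep L I w <-> exists i, irange I i /\ L_pow L i w.
Proof.
split.
  move=> [[i [H1 H2]]|[H1 H2]]; first by exists i; split; [left|].
  by exists 0; split; [right|].
by move=> [i [[H1|[H1 ->]] H2]]; [left; exists i|right].
Qed.

Lemma rep_one {S : finType} (L : lang S) w : L_rep L m_one w <-> L w.
Proof.
rewrite rep_iff; split.
  move=> [i [[[/= H1 H2]|[//]] H]]; have E : i = 1 by lia.
  by subst i; rewrite -pow1.
by move=> H; exists 1; split; [left|rewrite pow1].
Qed.

Lemma rep_opt {S : finType} (L : lang S) w : L_rep L m_opt w <-> w = eps S \/ L w.
Proof.
rewrite rep_iff; split.
  move=> [i [[[/= H1 H2]|[//]] H]].
  by case: i H1 H2 H => [|[|//]] _ _ H; [left|right; rewrite -pow1].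
by move=> [->|H]; [exists 0|exists 1; rewrite pow1]; split => //; left.
Qed.

Lemma pow_mono {S : finType} {L L' : lang S} {n w} :
  (forall v, L v -> L' v) -> L_pow L n w -> L_pow L' n w.
Proof.
move=> H; elim: n w => //= n IH w [w1 [w2 [H1 [H2 ->]]]].
by exists w1, w2; split; [exact: H|split; [exact: IH|]].
Qed.

Lemma pow_add {S : finType} {L : lang S} {m n u v} :
  L_pow L m u -> L_pow L n v -> L_pow L (m + n) (uconc u v).
Proof.
elim: m u => [|m IH] u /=; first by move=> -> Hv; rewrite uconc0w.
move=> [w1 [w2 [H1 [H2 ->]]]] Hv; exists w1, (uconc w2 v).
by split => //; split; [exact: IH| rewrite uconcA].
Qed.

Definition supp {S : finType} (s : seq S) (L : lang S) :=
  forall w, L w -> forall a, a \notin s -> w a = 0.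

Lemma supp_eps {S : finType} (s : seq S) : supp s (@L_eps S).
Proof. by move=> w -> a _; rewrite epsE. Qed.

Lemma supp_conc {S : finType} {s : seq S} {L1 L2} :
  supp s L1 -> supp s L2 -> supp s (L_conc L1 L2).
Proof.
move=> H1 H2 w [w1 [w2 [L1w [L2w ->]]]] a Ha.
by rewrite uconcE (H1 _ L1w a Ha) (H2 _ L2w a Ha).
Qed.

Lemma supp_pow {S : finType} {s : seq S} {L n} : supp s L -> supp s (L_pow L n).
Proof. move=> H; elim: n => [|n IH] /=; [exact: supp_eps|exact: supp_conc]. Qed.

Lemma supp_rep {S : finType} {s : seq S} {L I} : supp s L -> supp s (L_rep L I).
Proof.
move=> H w /rep_iff [i [_ Hw]]; exact: (supp_pow (n:=i) H w Hw).
Qed.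

Lemma supp_sub {S : finType} {s s' : seq S} {L} :
  {subset s <= s'} -> supp s L -> supp s' L.
Proof.
move=> Hs H w Lw a Ha; apply: (H w Lw); apply: contra Ha; exact: Hs.
Qed.

Lemma supp_atom {S : finType} (A : atom S) : supp (syms A) (L_atom A).
Proof.
elim: A => [|p A IH] /=; first exact: supp_eps.
apply: supp_conc.
  apply: supp_rep => w -> a; rewrite ffunE in_cons; by case: eqP.
by apply: supp_sub IH => x Hx; rewrite in_cons Hx orbT.
Qed.

Lemma supp_clause {S : finType} (C : clause S) : supp (csyms C) (L_clause C).
Proof.
elim: C => [|p C IH] /=; first by move=> w [].
move=> w [Hw|Hw] a Ha.
  apply: (supp_rep (supp_atom p.1) w Hw a); apply: contra Ha => H.
  by rewrite /csyms /= mem_cat H.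
apply: (IH w Hw); apply: contra Ha => H; by rewrite /csyms /= mem_cat H orbT.
Qed.

Lemma supp_dime {S : finType} (E : dime S) : supp (dime_symbols E) (L_dime E).
Proof.
elim: E => [|p E IH] /=; first exact: supp_eps.
apply: supp_conc.
  apply: supp_rep; apply: supp_sub (supp_clause p.1) => x Hx.
  by rewrite /dime_symbols /= mem_cat Hx.
by apply: supp_sub IH => x Hx; rewrite /dime_symbols /= mem_cat Hx orbT.
Qed.

Definition atom_ok {S : finType} (A : atom S) :=
  forall p, List.In p A -> p.2 = m_opt \/ p.2 = m_one.

Definition atom_pow {S : finType} (A : atom S) (i : nat) (v : word S) :=
  (forall a, a \notin syms A -> v a = 0) /\
  (forall p, List.In p A -> v p.1 <= i /\ (p.2 = m_one -> v p.1 = i)).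

Definition delta {S : finType} (a : S) : word S := [ffun x => nat_of_bool (x == a)].

Lemma m_one_opt : m_one <> m_opt.
Proof. by []. Qed.

Lemma atom1 {S : finType} (A : atom S) :
  atom_ok A -> uniq (syms A) -> forall u, L_atom A u <-> atom_pow A 1 u.
Proof.
elim: A => [|p A IH] Hok.
  move=> _ u; split.
    by move=> -> /=; split => // a _; rewrite epsE.
  move=> [Hs _]; apply/ffunP => a; rewrite epsE; exact: Hs.
rewrite /= => /andP[Hp Hu] u.
have HokA : atom_ok A by move=> r Hr; apply: Hok; right.
have IHA := IH HokA Hu.
have Hpin : forall r, List.In r A -> r.1 != p.1.
  move=> r Hr; apply: contraNneq Hp => <-; exact: In_syms.
split.
- move=> [x [y [Hx [Hy ->]]]].
  have [Hy1 Hy2] := (IHA y).1 Hy.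
  have Hx' : (x = eps S \/ x = delta p.1) /\ (p.2 = m_one -> x = delta p.1).
    case: (Hok p (or_introl erefl)) => E; rewrite E in Hx.
      split; last by rewrite E.
      by move/rep_opt: Hx => [->|->]; [left|right].
    by move/rep_one: Hx => ->; split; [right|].
  have Hxa : forall a, a != p.1 -> x a = 0.
    move=> a Ha; case: Hx' => [[->|->] _]; rewrite ?epsE // ffunE (negbTE Ha) //.
  have Hy0 : y p.1 = 0 by apply: Hy1.
  split.
    move=> a; rewrite in_cons negb_or => /andP[Ha1 Ha2].
    by rewrite uconcE Hxa // Hy1.
  move=> r [<-|Hr].
    rewrite uconcE Hy0 addn0; case: Hx' => [[->|->] H]; split.
    + by rewrite epsE.
    + move/H => E; have := f_equal (fun f : word S => f p.1) E.
      by rewrite /= epsE ffunE eqxx.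
    + by rewrite ffunE eqxx.
    + by rewrite ffunE eqxx.
  rewrite uconcE Hxa; last exact: Hpin.
  exact: Hy2.
- move=> [Hs He].
  pose x : word S := [ffun b => if b == p.1 then u b else 0].
  pose y : word S := [ffun b => if b == p.1 then 0 else u b].
  exists x, y; split; last split.
  + have [Hp1 Hp2] := He p (or_introl erefl).
    case: (Hok p (or_introl erefl)) => E; rewrite E.
      apply/rep_opt; have : u p.1 = 0 \/ u p.1 = 1 by lia.
      case=> Eu; [left|right]; apply/ffunP => b; rewrite !ffunE;
        case: eqP => [->|] //; by rewrite Eu.
    apply/rep_one; apply/ffunP => b; rewrite !ffunE; case: eqP => [->|//].
    exact: Hp2.
  + apply/(IHA y); split.
      move=> a Ha; rewrite ffunE; case: eqP => // /eqP Hne; apply: Hs.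
      by rewrite in_cons negb_or Hne.
    move=> r Hr; rewrite ffunE (negbTE (Hpin r Hr)); apply: He; by right.
  + apply/ffunP => b; rewrite !ffunE; case: eqP => _; by rewrite ?addn0.
Qed.

Lemma atom_pow_add {S : finType} {A : atom S} {i j u v} :
  atom_pow A i u -> atom_pow A j v -> atom_pow A (i + j) (uconc u v).
Proof.
move=> [Hu1 Hu2] [Hv1 Hv2]; split.
  by move=> a Ha; rewrite uconcE Hu1 ?Hv1.
move=> p Hp; have [H1 H2] := Hu2 p Hp; have [H3 H4] := Hv2 p Hp.
rewrite uconcE; split; first lia.
by move=> E; rewrite H2 ?H4.
Qed.

Lemma atom_pow0 {S : finType} {A : atom S} {v} : atom_pow A 0 v <-> v = eps S.
Proof.
split.
  move=> [H1 H2]; apply/ffunP => a; rewrite epsE.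
  case Ha: (a \in syms A); last by apply: H1; rewrite Ha.
  have [r [Hr <-]] := in_syms_In Ha; have [H _] := H2 r Hr; lia.
by move=> ->; split => [a _|p _]; rewrite epsE.
Qed.

Lemma atom_pow_iff {S : finType} (A : atom S) i v :
  atom_ok A -> uniq (syms A) -> L_pow (L_atom A) i v <-> atom_pow A i v.
Proof.
move=> Hok Hu; split.
  elim: i v => [|i IH] v /=; first by move=> ->; apply/atom_pow0.
  move=> [x [y [Hx [Hy ->]]]]; rewrite -add1n.
  by apply: atom_pow_add; [apply/(atom1 A Hok Hu)|exact: IH].
elim: i v => [|i IH] v /=; first by move/atom_pow0.
move=> [Hs He].
pose u : word S := [ffun b => nat_of_bool ((b \in syms A) && (0 < v b))].
pose v' : word S := [ffun b => v b - u b].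
exists u, v'; split; last split.
- apply/(atom1 A Hok Hu); split.
    by move=> a Ha; rewrite ffunE (negbTE Ha).
  move=> p Hp; rewrite ffunE (In_syms Hp) /=; split; first by case: (0 < v p.1).
  by move=> E; have [_ H] := He p Hp; rewrite H.
- apply: IH; split.
    by move=> a Ha; rewrite !ffunE Hs.
  move=> p Hp; have [H1 H2] := He p Hp; rewrite !ffunE (In_syms Hp) /=.
  split; first by case: (ltnP 0 (v p.1)) => /= H; lia.
  by move=> E; rewrite H2 //=; lia.
- apply/ffunP => b; rewrite !ffunE.
  case: (b \in syms A); case: (ltnP 0 (v b)) => /= H; lia.
Qed.

Lemma rep_atom {S : finType} (A : atom S) I v :
  atom_ok A -> uniq (syms A) ->
  L_rep (L_atom A) I v <-> exists i, irange I i /\ atom_pow A i v.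
Proof.
move=> Hok Hu; rewrite rep_iff; split; move=> [i [Hi H]]; exists i; split => //;
  by apply/(atom_pow_iff A i v Hok Hu).
Qed.

Lemma argmax {S : finType} (s : seq S) (f : S -> nat) a :
  a \in s -> exists2 x, x \in s & forall y, y \in s -> f y <= f x.
Proof.
elim: s a => // b s IH a _.
case: s IH => [|c s] IH.
  by exists b; rewrite ?mem_seq1 // => y; rewrite mem_seq1 => /eqP ->.
have [x Hx Hm] := IH c (mem_head _ _).
case: (leqP (f b) (f x)) => H.
  exists x; first by rewrite in_cons Hx orbT.
  by move=> y; rewrite in_cons => /orP[/eqP ->|/Hm].
exists b; first exact: mem_head.
move=> y; rewrite in_cons => /orP[/eqP ->//|/Hm]; lia.
Qed.

Lemma uniq_syms_In {S : finType} {C : clause S} {p} :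
  uniq (csyms C) -> List.In p C -> uniq (syms p.1).
Proof.
elim: C => //= r C IH; rewrite /csyms /= cat_uniq => /and3P[U1 _ U3] [<-|H] //.
exact: IH.
Qed.

Lemma clause_iff {S : finType} (C : clause S) v :
  L_clause C v <-> exists p, List.In p C /\ L_rep (L_atom p.1) p.2 v.
Proof.
elim: C => [|p C IH] /=; first by split => // -[p []].
split.
  move=> [H|/IH [p' [H1 H2]]]; first by exists p; split; [left|].
  by exists p'; split; [right|].
move=> [p' [[<-|H1] H2]]; first by left.
by right; apply/IH; exists p'.
Qed.

Definition clause_ok {S : finType} (C : clause S) :=
  forall p, List.In p C -> atom_ok p.1.

Lemma clause_atom {S : finType} {C : clause S} {v} c :
  clause_ok C -> uniq (csyms C) -> L_clause C v -> v c <> 0 ->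
  exists p i, [/\ List.In p C, irange p.2 i, atom_pow p.1 i v & c \in syms p.1].
Proof.
move=> Hok Hu /clause_iff [p [Hp Hr]] Hc.
have [i [Hi Ha]] := (rep_atom p.1 p.2 v (Hok p Hp) (uniq_syms_In Hu Hp)).1 Hr.
exists p, i; split => //.
case: (boolP (c \in syms p.1)) => // Hn; exfalso; apply: Hc; exact: Ha.1 c Hn.
Qed.

Definition Good {S : finType} (C : clause S) (v : word S) :=
  forall p q x, List.In p C -> List.In q p.1 -> q.2 = m_one -> x \in syms p.1 ->
    v x <= v q.1.

Lemma Good_eps {S : finType} (C : clause S) : Good C (eps S).
Proof. by move=> p q x _ _ _ _; rewrite !epsE. Qed.

Lemma Good_conc {S : finType} (C : clause S) u v :
  Good C u -> Good C v -> Good C (uconc u v).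
Proof.
move=> Hu Hv p q x H1 H2 H3 H4; rewrite !uconcE.
have := Hu p q x H1 H2 H3 H4; have := Hv p q x H1 H2 H3 H4; lia.
Qed.

Lemma clause_good {S : finType} (C : clause S) v :
  clause_ok C -> uniq (csyms C) -> L_clause C v -> Good C v.
Proof.
move=> Hok Hu Hv p q x Hp Hq Hq1 Hx.
case: (eqVneq (v x) 0) => [->//|Hvx].
have [p' [i [Hp' Hi [Ha1 Ha2] Hx']]] := clause_atom x Hok Hu Hv (elimN eqP Hvx).
have E := uniq_same Hu Hp Hp' Hx Hx'; subst p'.
have [r [Hr <-]] := in_syms_In Hx.
have [H1 _] := Ha2 r Hr; have [_ H2] := Ha2 q Hq.
by rewrite H2.
Qed.

Lemma clause_charac {S : finType} (C : clause S) (b : bool) :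
  clause_ok C -> uniq (csyms C) ->
  charac (fun w => (b /\ w = eps S) \/ L_clause C w).
Proof.
move=> Hok Hu w Hm; have [HC HN HP HK] := Hm.
case: (classic (w = eps S)) => [E|Hne]; first by subst w; exact: (eps_case _ Hm).
have [a Ha] := neq_eps _ Hne.
set Lc := (fun w => (b /\ w = eps S) \/ L_clause C w) in HC HN HP HK Hm *.
have Lcl : forall u c, Lc u -> u c <> 0 -> L_clause C u.
  move=> u c [[_ E]|//] Huc; by exfalso; apply: Huc; rewrite E epsE.
have [v [Lv Hva]] := HN a.
have Hva' : v a <> 0 by rewrite Hva.
have [p [i [Hp Hi Hv Hap]]] := clause_atom a Hok Hu (Lcl v a Lv Hva') Hva'.
have HokA := Hok p Hp; have HuA := uniq_syms_In Hu Hp.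
have Hsupp : forall c, c \notin syms p.1 -> w c = 0.
  move=> c Hc; apply: NNPP => Hwc; apply: (HC a c) => //.
  move=> [u [Lu [Hua Huc]]].
  have [p' [i' [Hp' _ Hu' Hap']]] := clause_atom a Hok Hu (Lcl u a Lu Hua) Hua.
  have E := uniq_same Hu Hp Hp' Hap Hap'; subst p'.
  by apply: Huc; apply: Hu'.1.
have HKw : forall q x, List.In q p.1 -> q.2 = m_one -> x \in syms p.1 -> w x <= w q.1.
  move=> q x Hq Hq1 Hx; apply: (HK q.1 x) => u [[_ ->]|Lu]; first by rewrite !epsE.
  exact: (clause_good C u Hok Hu Lu p q x Hp Hq Hq1 Hx).
right; apply/clause_iff; exists p; split => //; apply/(rep_atom _ _ _ HokA HuA).
case: (classic (exists q, List.In q p.1 /\ q.2 = m_one)) => [[q [Hq Hq1]]|Hnm].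
- have [v' [Lv' Hv']] := HN q.1.
  have Hwq : w q.1 <> 0 by have := HKw q a Hq Hq1 Hap; lia.
  have Hv'q : v' q.1 <> 0 by rewrite Hv'.
  have [p' [i' [Hp' Hi' Ha' Hq']]] := clause_atom q.1 Hok Hu (Lcl v' _ Lv' Hv'q) Hv'q.
  have E := uniq_same Hu Hp Hp' (In_syms Hq) Hq'; subst p'.
  have Ei : w q.1 = i' by rewrite -Hv'; apply: (Ha'.2 q Hq).2.
  exists i'; split => //; split => // r Hr; split.
    by rewrite -Ei; apply: HKw => //; exact: In_syms.
  move=> Hr1; apply/eqP; rewrite eqn_leq -{1}Ei HKw ?(In_syms Hr) //=.
  by rewrite -Ei; apply: HKw => //; exact: In_syms.
- have [x Hx Hmax] := argmax (syms p.1) w a Hap.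
  have Hwx : w x <> 0 by have := Hmax a Hap; lia.
  have [v' [Lv' Hv']] := HN x.
  have Hv'x : v' x <> 0 by rewrite Hv'.
  have [p' [i' [Hp' Hi' Ha' Hx']]] := clause_atom x Hok Hu (Lcl v' _ Lv' Hv'x) Hv'x.
  have E := uniq_same Hu Hp Hp' Hx Hx'; subst p'.
  have Hxi : w x <= i'.
    have [r [Hr Er]] := in_syms_In Hx; rewrite -Hv' -Er; exact: (Ha'.2 r Hr).1.
  exists i'; split => //; split => // r Hr; split.
    by apply: leq_trans Hxi; apply: Hmax; exact: In_syms.
  by move=> Hr1; exfalso; apply: Hnm; exists r.
Qed.

Lemma Good_pow {S : finType} (C : clause S) n v :
  clause_ok C -> uniq (csyms C) -> L_pow (L_clause C) n v -> Good C v.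
Proof.
move=> Hok Hu; elim: n v => [|n IH] v /=; first by move=> ->; exact: Good_eps.
move=> [x [y [Hx [Hy ->]]]]; apply: Good_conc; [exact: clause_good|exact: IH].
Qed.

Lemma star_build {S : finType} (C C' : clause S) :
  clause_ok C -> (forall p, List.In p C -> p.2 = m_opt \/ p.2 = m_one) ->
  (forall p, List.In p C' -> List.In p C) -> uniq (csyms C') ->
  (forall p, List.In p C' -> p.1 <> [::]) ->
  forall w : word S, (forall b, b \notin csyms C' -> w b = 0) -> Good C' w ->
  exists n, L_pow (L_clause C) n w.
Proof.
move=> Hok Hsim; elim: C' => [|p C' IH] Hsub Hu Hne w Hs HG.
  exists 0; apply/ffunP => a; rewrite epsE; exact: Hs.
have Hp : List.In p C by apply: Hsub; left.
move: (Hu); rewrite /csyms /= cat_uniq => /and3P[U1 U2 U3].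
pose P := fun a => a \in syms p.1.
have Hdis : forall c, c \in csyms C' -> ~~ P c.
  move=> c Hc; apply/negP => Pc; move/hasPn: U2 => /(_ c Hc) /negP; apply; exact: Pc.
have [n2 H2] : exists n, L_pow (L_clause C) n (restr (predC P) w).
  apply: IH => //.
  - by move=> r Hr; apply: Hsub; right.
  - by move=> r Hr; apply: Hne; right.
  - move=> c Hc; rewrite restrE /=; case Pc: (P c) => //=; apply: Hs.
    have Pc' : (c \in syms p.1) = false := Pc.
    by rewrite /csyms /= mem_cat negb_or Pc' Hc.
  - move=> p' q x Hp' Hq Hq1 Hx; rewrite !restrE /=.
    rewrite (negbTE (Hdis _ (In_csyms Hp' Hx))).
    rewrite (negbTE (Hdis _ (In_csyms Hp' (In_syms Hq)))) /=.
    by apply: (HG p' q x) => //; right.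
have [a0 Ha0] : exists a, a \in syms p.1.
  case E: p.1 (Hne p (or_introl erefl)) => [//|r A] _.
  by exists r.1; rewrite /syms /= mem_head.
have [x Hx Hmax] := argmax (syms p.1) w a0 Ha0.
have H1 : L_pow (L_clause C) (w x) (restr P w).
  apply: (pow_mono (L := L_atom p.1)).
    move=> u Hu'; apply/clause_iff; exists p; split => //.
    by case: (Hsim p Hp) => ->; [apply/rep_opt; right|apply/rep_one].
  apply/atom_pow_iff; [exact: Hok|exact: U1|split].
    by move=> a Ha; rewrite restrE /P (negbTE Ha).
  move=> r Hr; rewrite restrE /P (In_syms Hr); split; first by apply: Hmax; exact: In_syms.
  move=> Hr1; apply/eqP; rewrite eqn_leq Hmax ?(In_syms Hr) //=.
  by apply: (HG p r x) => //; left.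
exists (w x + n2).
have Ew : uconc (restr P w) (restr (predC P) w) = w.
  by apply/ffunP => b; rewrite uconcE !restrE /=; case: (P b); rewrite ?addn0.
by have := pow_add H1 H2; rewrite Ew.
Qed.

Lemma star_charac {S : finType} (C : clause S) I :
  clause_ok C -> (forall p, List.In p C -> p.2 = m_opt \/ p.2 = m_one) ->
  (forall p, List.In p C -> p.1 <> [::]) -> uniq (csyms C) ->
  I = m_plus \/ I = m_star -> charac (L_rep (L_clause C) I).
Proof.
move=> Hok Hsim Hne Hu HI w Hm; have [HC HN HP HK] := Hm.
case: (classic (w = eps S)) => [E|Hnw]; first by subst w; exact: (eps_case _ Hm).
have Hs : forall b, b \notin csyms C -> w b = 0.
  move=> b Hb; have [v [Lv <-]] := HN b; exact: (supp_rep (supp_clause C) v Lv b Hb).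
have HG : Good C w.
  move=> p q x Hp Hq Hq1 Hx; apply: (HK q.1 x) => v /rep_iff [n [_ Hv]].
  exact: (Good_pow C n v Hok Hu Hv p q x Hp Hq Hq1 Hx).
have [n Hn] := star_build C C Hok Hsim (fun p H => H) Hu Hne w Hs HG.
apply/rep_iff; exists n; split => //; left.
case: n Hn => [|n] Hn; first by exfalso; apply: Hnw; exact: Hn.
by case: HI => ->.
Qed.

Lemma is_clause_ok {S : finType} (C : clause S) :
  is_clause C -> clause_ok C /\ (forall p, List.In p C -> p.1 <> [::]).
Proof.
move=> [_ H]; split => p Hp; have [[H1 H2] _] := H p Hp => //.
Qed.

Lemma dime_charac {S : finType} (E : dime S) :
  (forall p, List.In p E ->
         (is_simple_clause p.1 /\ (p.2 = m_plus \/ p.2 = m_star)) \/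
         (is_clause p.1 /\ (p.2 = m_one \/ p.2 = m_opt))) ->
  uniq (dime_symbols E) -> charac (L_dime E).
Proof.
elim: E => [|p E IH] HE Hu /=.
  move=> w [_ HN _ _]; apply/ffunP => a; rewrite epsE.
  by have [v [-> <-]] := HN a; rewrite epsE.
move: Hu; rewrite /dime_symbols /= cat_uniq => /and3P[U1 U2 U3].
have Hdis : forall c, c \in dime_symbols E -> c \notin csyms p.1.
  move=> c Hc; apply/negP => Pc; move/hasPn: U2 => /(_ c Hc); by rewrite /= Pc.
apply: (charac_conc _ _ (fun a => a \in csyms p.1)).
- case: (HE p (or_introl erefl)) => [[[Hc Hsim] HI]|[Hc HI]].
    have [Hok Hne] := is_clause_ok _ Hc.
    by apply: star_charac.
  have [Hok Hne] := is_clause_ok _ Hc.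
  case: HI => ->.
    apply: (charac_ext _ _ _ (clause_charac p.1 false Hok U1)) => w.
    rewrite rep_one; split; [by case => [[H _]|H]|by right].
  apply: (charac_ext _ _ _ (clause_charac p.1 true Hok U1)) => w.
  rewrite rep_opt; split; first by case => [[_ ->]|H]; [left|right].
  by case => [->|H]; [left|right].
- apply: IH => //; move=> r Hr; apply: HE; by right.
- move=> u Hu a Ha; exact: (supp_rep (supp_clause p.1) u Hu a Ha).
- move=> u Hu a Ha; apply: (supp_dime E u Hu a).
  by apply: contraL Ha => /Hdis.
Qed.

Theorem lemma1 (Sigma : finType) (E : dime Sigma) (w : word Sigma) :
  is_dime E -> (L_dime E w <-> models w (Delta (L_dime E))).
Proof.
move=> [_ HE Hu]; split; first exact: models_mem.
exact: (dime_charac E HE Hu).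
Qed.
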